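(* Let $S$ be an abelian semigroup (written additively, containing an identity element $0$), let $r \geq 1$, and let $A_1,\ldots,A_r, B$ be finite, nonempty subsets of $S$. Then there exists a polynomial $p(z_1,\ldots,z_r)$ such that \[ |B + h_1A_1 + \cdots + h_rA_r| = p(h_1,\ldots,h_r) \] for all nonnegative integers $h_1,\ldots,h_r$ with $\min(h_1,\ldots,h_r)$ sufficiently large.
   Context: For a nonempty subset $A$ of $S$ and a positive integer $h$, $hA$ denotes the set of all sums of $h$ not necessarily distinct elements of $A$, and $0A = \{0\}$. For nonempty subsets $A_1,\ldots,A_r,B$ of $S$ and nonnegative integers $h_1,\ldots,h_r$, $B + h_1A_1 + \cdots + h_rA_r$ denotes the set of all elements of $S$ of the form $b + u_1 + \cdots + u_r$ with $b \in B$ and $u_i \in h_iA_i$ for each $i$. $|X|$ denotes the cardinality of a set $X$. *)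

(* Defs.v *)
From HB Require Import structures.
From mathcomp Require Import all_boot all_order all_algebra.
From mathcomp Require Import finmap.
From mathcomp Require Export mpoly.
Set Implicit Arguments. Unset Strict Implicit. Unset Printing Implicit Defensive.
Import GRing.Theory.
Local Open Scope fset_scope.
Local Open Scope ring_scope.

(* A commutative (additively written) monoid = abelian semigroup with 0:
   MathComp's nmodType. Finite subsets are {fset S}. *)

Definition sumset (S : nmodType) (X Y : {fset S}) : {fset S} :=
  [fset x + y | x in X, y in Y].

Fixpoint hfold (S : nmodType) (h : nat) (A : {fset S}) : {fset S} :=
  match h with
  | 0%N => [fset (0 : S)]
  | h'.+1 => sumset A (hfold h' A)
  end.

Definition multisumset (S : nmodType) (r : nat) (B : {fset S})
  (A : 'I_r -> {fset S}) (h : 'I_r -> nat) : {fset S} :=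
  foldr (fun i X => sumset X (hfold (h i) (A i))) B (enum 'I_r).

(* Main.v *)
Require Import Defs.
From HB Require Import structures.
From mathcomp Require Import all_boot all_order all_algebra.
From mathcomp Require Import finmap.
From mathcomp Require Import mpoly.
From Stdlib Require Import Classical.
Local Open Scope fset_scope.
Local Open Scope ring_scope.
Set Implicit Arguments. Unset Strict Implicit. Unset Printing Implicit Defensive.
Import GRing.Theory Num.Theory.

Section Vec.
Local Open Scope nat_scope.

Fixpoint vle (v w : seq nat) : bool :=
  match v, w with
  | [::], [::] => true
  | x :: v', y :: w' => (x <= y) && vle v' w'
  | _, _ => false
  end.

Fixpoint addv (v w : seq nat) : seq nat :=
  match v, w with
  | x :: v', y :: w' => (x + y) :: addv v' w'
  | _, _ => [::]
  end.

Fixpoint subv (v w : seq nat) : seq nat :=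
  match v, w with
  | x :: v', y :: w' => (x - y) :: subv v' w'
  | _, _ => [::]
  end.

Fixpoint lexlt (v w : seq nat) : bool :=
  match v, w with
  | x :: v', y :: w' => (x < y) || ((x == y) && lexlt v' w')
  | _, _ => false
  end.

Fixpoint deg (ks : seq nat) (v : seq nat) : seq nat :=
  match ks with
  | [::] => [::]
  | k :: ks' => sumn (take k v) :: deg ks' (drop k v)
  end.

Fixpoint vecsB (k s : nat) : seq (seq nat) :=
  match k with
  | 0 => if s == 0 then [:: [::]] else [::]
  | k'.+1 => [seq t :: x | t <- iota 0 s.+1, x <- vecsB k' (s - t)]
  end.

Fixpoint vecs (ks d : seq nat) : seq (seq nat) :=
  match ks, d with
  | [::], [::] => [:: [::]]
  | k :: ks', s :: d' => [seq x ++ y | x <- vecsB k s, y <- vecs ks' d']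
  | _, _ => [::]
  end.

Lemma vle_size v w : vle v w -> size v = size w.
Proof. by elim: v w => [|x v IH] [|y w] //= /andP[_ /IH ->]. Qed.

Lemma vle_refl v : vle v v.
Proof. by elim: v => //= x v ->; rewrite leqnn. Qed.

Lemma vle_trans u v w : vle u v -> vle v w -> vle u w.
Proof.
elim: u v w => [|x u IH] [|y v] [|z w] //= /andP[h1 h2] /andP[h3 h4].
by rewrite (leq_trans h1 h3) (IH _ _ h2 h4).
Qed.

Lemma size_addv v w : size v = size w -> size (addv v w) = size v.
Proof. by elim: v w => [|x v IH] [|y w] //= [/IH ->]. Qed.

Lemma size_subv v w : size v = size w -> size (subv v w) = size v.
Proof. by elim: v w => [|x v IH] [|y w] //= [/IH ->]. Qed.

Lemma addv_subv g v : vle g v -> addv g (subv v g) = v.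
Proof. by elim: g v => [|x g IH] [|y v] //= /andP[h1 /IH ->]; rewrite subnKC. Qed.

Lemma subv_addv g w : size g = size w -> subv (addv g w) g = w.
Proof. by elim: g w => [|x g IH] [|y w] //= [/IH ->]; rewrite addKn. Qed.

Lemma vle_addv_sub g' g w : size g' = size g -> size g = size w ->
  vle g' (addv g w) = vle (subv g' g) w.
Proof.
elim: g' g w => [|x g' IH] [|y g] [|z w] //= [e1] [e2].
by rewrite IH // leq_subLR.
Qed.

Lemma vle_addvr g w : size g = size w -> vle g (addv g w).
Proof. by elim: g w => [|x g IH] [|y w] //= [/IH ->]; rewrite leq_addr. Qed.

Lemma addvC v w : addv v w = addv w v.
Proof. by elim: v w => [|x v IH] [|y w] //=; rewrite IH addnC. Qed.

Lemma addvA u v w : addv u (addv v w) = addv (addv u v) w.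
Proof. by elim: u v w => [|x u IH] [|y v] [|z w] //=; rewrite IH addnA. Qed.

Lemma take_addv k v w : take k (addv v w) = addv (take k v) (take k w).
Proof. by elim: k v w => [|k IH] [|x v] [|y w] //=; rewrite IH. Qed.

Lemma drop_addv k v w : drop k (addv v w) = addv (drop k v) (drop k w).
Proof.
elim: k v w => [|k IH] [|x v] [|y w] //=; rewrite ?drop0 //.
by case: (drop k v).
Qed.

Lemma sumn_addv v w : size v = size w -> sumn (addv v w) = sumn v + sumn w.
Proof. by elim: v w => [|x v IH] [|y w] //= [/IH ->]; rewrite addnACA. Qed.

Lemma size_deg ks v : size (deg ks v) = size ks.
Proof. by elim: ks v => //= k ks IH v; rewrite IH. Qed.

Lemma deg_addv ks v w : size v = size w ->
  deg ks (addv v w) = addv (deg ks v) (deg ks w).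
Proof.
elim: ks v w => //= k ks IH v w e.
rewrite take_addv drop_addv sumn_addv ?IH // ?size_take ?size_drop e //.
Qed.

Lemma vle_deg ks g v : vle g v -> vle (deg ks g) (deg ks v).
Proof.
move=> h; rewrite -(addv_subv h) deg_addv; last first.
  by rewrite size_subv (vle_size h).
apply: vle_addvr; rewrite !size_deg //.
Qed.

Lemma deg_subv ks g v : vle g v -> deg ks (subv v g) = subv (deg ks v) (deg ks g).
Proof.
move=> h; rewrite -{2}(addv_subv h) deg_addv; last first.
  by rewrite size_subv (vle_size h).
by rewrite subv_addv // !size_deg.
Qed.

Lemma lexlt_irr v : lexlt v v = false.
Proof. by elim: v => //= x v ->; rewrite ltnn eqxx. Qed.

Lemma lexlt_trans u v w : lexlt u v -> lexlt v w -> lexlt u w.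
Proof.
elim: u v w => [|x u IH] [|y v] [|z w] //=.
case/orP=> [h1|/andP[/eqP-> h1]]; case/orP=> [h2|/andP[/eqP<- h2]].
- by rewrite (ltn_trans h1 h2).
- by rewrite h1.
- by rewrite h2.
- by rewrite eqxx (IH _ _ h1 h2) orbT.
Qed.

Lemma lexlt_total v w : size v = size w -> v != w -> lexlt v w || lexlt w v.
Proof.
elim: v w => [|x v IH] [|y w] //= [e]; rewrite eqseq_cons negb_and.
case: (ltngtP x y) => //= hxy; rewrite ?orbT //=.
by subst y => /(IH _ e).
Qed.

Lemma lexlt_addv v w x : size v = size x -> size w = size x ->
  lexlt v w -> lexlt (addv v x) (addv w x).
Proof.
elim: v w x => [|a v IH] [|b w] [|c x] //= [e1] [e2].
case/orP=> [h|/andP[/eqP-> h]]; first by rewrite ltn_add2r h.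
by rewrite eqxx IH // orbT.
Qed.


Lemma mem_vecsB k s v : (v \in vecsB k s) = (size v == k) && (sumn v == s).
Proof.
elim: k s v => [|k IH] s v.
  by case: s => [|s]; case: v => //= x v; rewrite inE.
have -> : vecsB k.+1 s = [seq t :: x | t <- iota 0 s.+1, x <- vecsB k (s - t)] by [].
apply/(@allpairsPdep _ (fun _ => seq nat))/idP.
  case=> t [x [ht hx ->]]; move: hx; rewrite IH /= => /andP[/eqP-> /eqP->].
  by move: ht; rewrite mem_iota add0n ltnS => ht; rewrite subnKC // !eqxx.
case: v => [|t x] // /andP[hs /eqP hsum]; exists t, x; split => //.
  by rewrite mem_iota add0n -hsum /= ltnS leq_addr.
by rewrite IH -hsum /= addKn eqxx andbT; rewrite eqSS in hs.
Qed.

Lemma uniq_vecsB k s : uniq (vecsB k s).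
Proof.
elim: k s => [|k IH] s; first by case: s.
have -> : vecsB k.+1 s = [seq t :: x | t <- iota 0 s.+1, x <- vecsB k (s - t)] by [].
apply: (@allpairs_uniq_dep _ (fun _ => seq nat)) => //; first exact: iota_uniq.
move=> [t1 x1] [t2 x2] _ _ /= [e1]; subst t2 => ->.
by [].
Qed.

Lemma binsum s k : \sum_(t < s.+1) 'C(t + k, k) = 'C(s + k.+1, k.+1).
Proof.
elim: s => [|s IH]; first by rewrite big_ord1 add0n binn add0n binn.
by rewrite big_ord_recr IH [in RHS]addSn binS -addSnnS.
Qed.

Lemma size_vecsB_rec k s : size (vecsB k.+1 s) = \sum_(t < s.+1) size (vecsB k t).
Proof.
have -> : vecsB k.+1 s = [seq t :: x | t <- iota 0 s.+1, x <- vecsB k (s - t)] by [].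
rewrite size_allpairs_dep sumnE big_map -(big_mkord xpredT (fun t => size (vecsB k t))).
rewrite big_nat_rev /= /index_iota subn0.
apply: eq_bigr => t _; rewrite add0n subSS //.
Qed.

Lemma size_vecsB k s : size (vecsB k.+1 s) = 'C(s + k, k).
Proof.
elim: k s => [|k IH] s; rewrite size_vecsB_rec.
  rewrite bin0 big_ord_recl /= big1 // => i _; by [].
rewrite -binsum; apply: eq_bigr => t _; exact: IH.
Qed.

Lemma mem_vecs ks d v : size d = size ks ->
  (v \in vecs ks d) = (size v == sumn ks) && (deg ks v == d).
Proof.
elim: ks d v => [|k ks IH] [|s d] v //=.
  by move=> _; rewrite inE; case: v.
move=> [e]; apply/allpairsP/idP.
  case=> [[x y] /= [hx hy ->]]; move: hx hy; rewrite mem_vecsB IH //.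
  case/andP=> /eqP hk /eqP hs /andP[/eqP hy /eqP hd].
  by rewrite size_cat hk hy eqxx take_size_cat // drop_size_cat // hs hd eqxx.
case/andP=> /eqP hsz /eqP; case=> hs hd.
exists (take k v, drop k v); split => /=; last by rewrite cat_take_drop.
  by rewrite mem_vecsB size_takel ?hsz ?leq_addr // hs !eqxx.
by rewrite IH // size_drop hsz addKn eqxx hd eqxx.
Qed.

Lemma uniq_vecs ks d : uniq (vecs ks d).
Proof.
elim: ks d => [|k ks IH] [|s d] //=.
apply: allpairs_uniq => //; first exact: uniq_vecsB.
move=> [x1 y1] [x2 y2] /allpairsP[[a1 b1] /= [h1 _ [-> ->]]].
move=> /allpairsP[[a2 b2] /= [h2 _ [-> ->]]] /= /eqP.
move: h1 h2; rewrite !mem_vecsB => /andP[/eqP s1 _] /andP[/eqP s2 _].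
by rewrite eqseq_cat ?s1 ?s2 // => /andP[/eqP-> /eqP->].
Qed.

Lemma size_vecs ks d : size ks = size d ->
  size (vecs ks d) = \prod_(p <- zip ks d) size (vecsB p.1 p.2).
Proof.
elim: ks d => [|k ks IH] [|s d] //=; first by rewrite big_nil.
by move=> [e]; rewrite size_allpairs big_cons IH.
Qed.


Lemma count_shift ks d g (P : pred (seq nat)) :
  size g = sumn ks -> size d = size ks ->
  count (fun v => vle g v && P v) (vecs ks d) =
  if vle (deg ks g) d then count (fun w => P (addv g w)) (vecs ks (subv d (deg ks g)))
  else 0.
Proof.
move=> hg hd; case: ifP => hdg; last first.
  rewrite (@eq_in_count _ _ pred0) ?count_pred0 // => v.
  rewrite mem_vecs // => /andP[_ /eqP hv] /=; apply/negbTE/negP => /andP[hgv _].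
  by move: (vle_deg ks hgv); rewrite hv hdg.
have hd' : size (subv d (deg ks g)) = size ks by rewrite size_subv ?size_deg ?hd.
rewrite (@eq_count _ _ (predI P (vle g))); last by move=> v; rewrite /= andbC.
rewrite -count_filter -(count_map (addv g) P); apply/permP; apply: uniq_perm.
- by apply: filter_uniq; apply: uniq_vecs.
- rewrite map_inj_in_uniq ?uniq_vecs // => w1 w2.
  rewrite !mem_vecs // => /andP[/eqP s1 _] /andP[/eqP s2 _] e.
  by rewrite -(@subv_addv g w1) ?e ?subv_addv // ?s1 ?s2.
move=> v; rewrite mem_filter; apply/idP/mapP.
  case/andP=> hgv; rewrite mem_vecs // => /andP[/eqP hsv /eqP hdv].
  exists (subv v g); last by rewrite addv_subv.
  rewrite mem_vecs // size_subv ?hsv ?eqxx //=.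
  by rewrite deg_subv // hdv eqxx.
case=> w; rewrite mem_vecs // => /andP[/eqP hsw /eqP hdw] ->.
rewrite vle_addvr ?hsw //= mem_vecs // size_addv ?hsw // hg eqxx /=.
by rewrite deg_addv ?hsw // hdw addv_subv.
Qed.

Definition upclosed (U : seq nat -> Prop) := forall v w, U v -> vle v w -> U w.

Definition fbasis n (U : seq nat -> Prop) (G : seq (seq nat)) :=
  (forall g, g \in G -> U g /\ size g = n) /\
  (forall v, size v = n -> U v -> has (fun g => vle g v) G).

Lemma upclosed_slice U t : upclosed U -> upclosed (fun w => U (t :: w)).
Proof. by move=> hU v w hv hvw; apply: (hU _ _ hv); rewrite /= leqnn. Qed.

Lemma dickson n (U : seq nat -> Prop) : upclosed U -> exists G, fbasis n U G.
Proof.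
elim: n U => [|n IH] U hU.
  case: (classic (U [::])) => h0.
    exists [:: [::]]; split.
      by move=> g; rewrite inE => /eqP->.
    by case.
  exists [::]; split => // -[|x v] // _ h; by [].
have hsl : forall t, exists Gt, (forall g, g \in Gt -> U g /\ size g = n.+1) /\
    (forall w, size w = n -> U (t :: w) -> has (fun g => vle g (t :: w)) Gt).
  move=> t; have [G0 [h1 h2]] := IH _ (@upclosed_slice U t hU).
  exists (map (cons t) G0); split.
    by move=> g /mapP[g0 /h1 [hg0 sg0] ->]; rewrite /= sg0.
  move=> w sw hw; rewrite has_map; apply: sub_has (h2 w sw hw) => g /=.
  by rewrite leqnn.
have hUinf : upclosed (fun w => exists t, U (t :: w)).
  move=> v w [t hv] hvw; exists t; exact: (@upclosed_slice U t hU _ _ hv hvw).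
have [Ginf [hi1 hi2]] := IH _ hUinf.
have hT : forall L : seq (seq nat), (forall g, g \in L -> exists t, U (t :: g)) ->
    exists T, forall g, g \in L -> U (T :: g).
  elim=> [|g L IHL] hL; first by exists 0.
  have [t ht] := hL g (mem_head _ _).
  have [T hTL] : exists T, forall g0, g0 \in L -> U (T :: g0).
    by apply: IHL => g0 hg0; apply: hL; rewrite inE hg0 orbT.
  exists (maxn t T) => g'; rewrite inE => /orP[/eqP->|hg'].
    by apply: (hU _ _ ht); rewrite /= leq_maxl vle_refl.
  by apply: (hU _ _ (hTL _ hg')); rewrite /= leq_maxr vle_refl.
have [T hTT] := hT Ginf (fun g hg => (hi1 g hg).1).
have hclaim : forall T', exists G, (forall g, g \in G -> U g /\ size g = n.+1) /\
    (forall t w, t <= T' -> size w = n -> U (t :: w) -> has (fun g => vle g (t :: w)) G).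
  elim=> [|T' [G [hG1 hG2]]].
    have [G0 [h1 h2]] := hsl 0; exists G0; split => // t w; rewrite leqn0 => /eqP->.
    exact: h2.
  have [G1 [h1 h2]] := hsl T'.+1; exists (G ++ G1); split.
    by move=> g; rewrite mem_cat => /orP[/hG1|/h1].
  move=> t w; rewrite leq_eqVlt ltnS => /orP[/eqP->|ht] sw hw; rewrite has_cat.
    by rewrite (h2 w sw hw) orbT.
  by rewrite (hG2 t w ht sw hw).
have [G [hG1 hG2]] := hclaim T.
exists G; split => // -[|t w] //= [sw] hw.
case: (leqP t T) => htT; first exact: hG2.
have /hasP[g hg hgw] := hi2 w sw (ex_intro _ t hw).
have /hasP[g' hg' hg'g] := hG2 T g (leqnn _) (hi1 g hg).2 (hTT g hg).
apply/hasP; exists g' => //; apply: (vle_trans hg'g); rewrite /= hgw ltnW //.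
Qed.
End Vec.

Section Poly.
Variable r : nat.
Local Open Scope ring_scope.

Definition evp (phi : ('I_r -> nat) -> nat) :=
  exists (p : {mpoly rat[r]}) (N : nat), forall h : 'I_r -> nat,
    (forall i, (N <= h i)%N) -> (phi h)%:R = p.@[fun i => (h i)%:R].

Lemma bigN (e : 'I_r -> nat) : exists N0, forall i, (e i <= N0)%N.
Proof. by exists (\sum_i e i)%N => i; rewrite (bigD1 i) //= leq_addr. Qed.

Lemma evp_ext phi psi : (exists N0, forall h, (forall i, (N0 <= h i)%N) -> phi h = psi h) ->
  evp psi -> evp phi.
Proof.
move=> [N0 hN] [p [N hp]]; exists p, (maxn N0 N) => h hh.
rewrite hN ?hp // => i; apply: leq_trans (hh i); by rewrite ?leq_maxl ?leq_maxr.
Qed.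

Lemma evp_const c : evp (fun _ => c).
Proof. by exists (c%:R)%:MP, 0%N => h _; rewrite mevalC. Qed.

Lemma evp_mul phi psi : evp phi -> evp psi -> evp (fun h => phi h * psi h)%N.
Proof.
move=> [p [N hp]] [q [M hq]]; exists (p * q), (maxn N M) => h hh.
rewrite natrM mevalM hp ?hq // => i; apply: leq_trans (hh i); by rewrite ?leq_maxl ?leq_maxr.
Qed.

Lemma evp_diff phi phi1 phi2 : evp phi1 -> evp phi2 ->
  (forall h, phi h + phi2 h = phi1 h)%N -> evp phi.
Proof.
move=> [p [N hp]] [q [M hq]] he; exists (p - q), (maxn N M) => h hh.
rewrite mevalB -hp -?hq -?he ?natrD ?addrK // => i; apply: leq_trans (hh i);
  by rewrite ?leq_maxl ?leq_maxr.
Qed.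

Lemma evp_shift phi (e : 'I_r -> nat) : evp phi -> evp (fun h => phi (fun i => h i - e i)%N).
Proof.
move=> [p [N hp]].
have [N0 hN0] := bigN e.
exists (p \mPo [tuple ('X_i - ((e i)%:R)%:MP) | i < r]), (N + N0)%N => h hh.
rewrite comp_mpoly_meval hp; last first.
  move=> i; rewrite leq_subRL; last first.
    by apply: leq_trans (hh i); apply: leq_trans (hN0 i) _; exact: leq_addl.
  by rewrite addnC; apply: leq_trans (hh i); rewrite leq_add2l.
apply: meval_eq => i; rewrite tnth_mktuple mevalB mevalXU mevalC natrB //.
by apply: leq_trans (hh i); apply: leq_trans (hN0 i) _; exact: leq_addl.
Qed.

Lemma binprod x a : ('C(x + a, a) * a`! = \prod_(j < a) (x + j.+1))%N.
Proof.
elim: a => [|a IH]; first by rewrite big_ord0 bin0.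
rewrite big_ord_recr /= -IH factS mulnCA mulnA -mul_bin_diag addnS /=.
by rewrite [RHS]mulnC mulnA.
Qed.

Lemma evp_bin (i : 'I_r) a : evp (fun h => 'C(h i + a, a)).
Proof.
exists (\prod_(j < a) ('X_i + ((j.+1)%:R)%:MP) * ((a`!)%:R^-1)%:MP), 0%N => h _.
rewrite mevalM mevalC rmorph_prod /=.
have ha : (a`!)%:R != 0 :> rat by rewrite pnatr_eq0 -lt0n fact_gt0.
apply: (mulIf ha); rewrite -mulrA mulVf // mulr1 -natrM binprod natr_prod.
by apply: eq_bigr => j _; rewrite mevalD mevalXU mevalC natrD.
Qed.

Lemma evp_prod (I : Type) (s : seq I) (phi : I -> ('I_r -> nat) -> nat) :
  (forall x, evp (phi x)) -> evp (fun h => \prod_(x <- s) phi x h)%N.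
Proof.
move=> hphi; elim: s => [|x s IH].
  by apply: (evp_ext _ (evp_const 1)); exists 0%N => h _; rewrite big_nil.
apply: (evp_ext _ (evp_mul (hphi x) IH)); exists 0%N => h _; by rewrite big_cons.
Qed.

End Poly.

Section Semi.
Variable S : nmodType.

Fixpoint sval (gs : seq S) (v : seq nat) : S :=
  match gs, v with
  | a :: gs', x :: v' => a *+ x + sval gs' v'
  | _, _ => 0
  end.

Lemma sval_cat g1 g2 x y : size g1 = size x ->
  sval (g1 ++ g2) (x ++ y) = sval g1 x + sval g2 y.
Proof.
elim: g1 x => [|a g1 IH] [|b x] //=; first by rewrite add0r.
by move=> [e]; rewrite IH // addrA.
Qed.

Lemma sval_addv g v w : size v = size w ->
  sval g (addv v w) = sval g v + sval g w.
Proof.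
elim: g v w => [|a g IH] [|x v] [|y w] //=; rewrite ?addr0 //.
by move=> [e]; rewrite IH // mulrnDr addrACA.
Qed.

Lemma sval_sumn0 g v : sumn v = 0%N -> sval g v = 0.
Proof.
elim: g v => [|a g IH] [|x v] //= /eqP; rewrite addn_eq0 => /andP[/eqP-> /eqP h].
by rewrite mulr0n add0r IH.
Qed.

Lemma sval_incr g v j : size v = size g -> (j < size g)%N ->
  sval g (incr_nth v j) = g`_j + sval g v.
Proof.
elim: g v j => [|a g IH] [|x v] [|j] //= [e] hj.
  by rewrite mulrS addrA.
by rewrite IH // addrCA.
Qed.

Lemma sumn_incr v j : sumn (incr_nth v j) = (sumn v).+1.
Proof.
elim: v j => [|x v IH] [|j] //=; first by elim: j => //.
by rewrite IH addnS.
Qed.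

Lemma size_incr v j : (j < size v)%N -> size (incr_nth v j) = size v.
Proof. by move=> h; rewrite size_incr_nth h. Qed.

Lemma decomp_incr v h : sumn v = h.+1 ->
  exists j w, [/\ (j < size v)%N, size w = size v, sumn w = h & v = incr_nth w j].
Proof.
elim: v h => [|x v IH] h //=.
case: x => [|x] /=.
  rewrite add0n => /IH [j [w [hj hw hs ev]]].
  by exists j.+1, (0%N :: w); split => //=; rewrite ?hw ?ev.
move=> [hs]; exists 0%N, (x :: v); split => //.
Qed.

Lemma sumsetP (X Y : {fset S}) y :
  reflect (exists2 x, x \in X & exists2 z, z \in Y & y = x + z) (y \in sumset X Y).
Proof. exact: imfset2P. Qed.

Lemma mem_hfold h (A : {fset S}) y :
  y \in hfold h A <-> exists2 v, v \in vecsB (size (enum_fset A)) h & y = sval (enum_fset A) v.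
Proof.
set gs := enum_fset A.
elim: h y => [|h IH] y /=.
  rewrite in_fset1; split.
    move=> /eqP->; exists (nseq (size gs) 0%N).
      by rewrite mem_vecsB size_nseq eqxx /=; elim: (size gs).
    by rewrite sval_sumn0 //; elim: (size gs).
  case=> v; rewrite mem_vecsB => /andP[_ /eqP h0] ->.
  by rewrite sval_sumn0.
split.
  case/sumsetP=> a ha [z /IH [v hv ->] ->].
  have hj : (index a gs < size gs)%N by rewrite index_mem.
  move: hv; rewrite mem_vecsB => /andP[/eqP sv /eqP sumv].
  exists (incr_nth v (index a gs)).
    by rewrite mem_vecsB size_incr ?sv // sumn_incr sumv !eqxx.
  by rewrite sval_incr // nth_index.
case=> v; rewrite mem_vecsB => /andP[/eqP sv /eqP sumv] ->.
have [j [w [hj hw hs ev]]] := decomp_incr sumv.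
apply/sumsetP; exists gs`_j; first by rewrite /gs mem_nth // -sv.
exists (sval gs w).
  by apply/IH; exists w => //; rewrite (mem_vecsB (size gs) h w) hw sv hs !eqxx.
by subst v; rewrite sval_incr // -?hw ?sv // -sv.
Qed.

End Semi.

Section Multi.
Variables (S : nmodType) (r : nat) (A : 'I_r -> {fset S}) (B : {fset S}) (h : 'I_r -> nat).

Definition gsA i := enum_fset (A i).
Definition kA i := size (gsA i).
Definition gB := enum_fset B.
Definition gen s := flatten (map gsA s) ++ gB.
Definition ksf s := rcons (map kA s) (size gB).
Definition df s := rcons (map h s) 1%N.

Lemma mem_foldr s y :
  y \in foldr (fun i X => sumset X (hfold (h i) (A i))) B s <->
  exists2 v, v \in vecs (ksf s) (df s) & y = sval (gen s) v.
Proof.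
elim: s y => [|i s IH] y.
  have -> : vecs (ksf [::]) (df [::]) =
    [seq x ++ y | x <- vecsB (size gB) 1, y <- [:: [::]]] by [].
  have -> : (y \in foldr (fun i X => sumset X (hfold (h i) (A i))) B [::]) = (y \in hfold 1 B).
    apply/idP/sumsetP.
      by move=> hy; exists y => //; exists 0; rewrite ?in_fset1 ?addr0.
    by case=> x hx [z]; rewrite in_fset1 => /eqP-> ->; rewrite addr0.
  rewrite mem_hfold; split.
    case=> v hv ->; exists (v ++ [::]); last by rewrite cats0.
    by apply/allpairsP; exists (v, [::]); split => //=; rewrite inE.
  case=> v /allpairsP [[x u] /= [hx]]; rewrite inE => /eqP-> -> ->.
  by exists x => //; rewrite cats0.
have -> : vecs (ksf (i :: s)) (df (i :: s)) =
    [seq x ++ y | x <- vecsB (kA i) (h i), y <- vecs (ksf s) (df s)] by [].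
have -> : foldr (fun i X => sumset X (hfold (h i) (A i))) B (i :: s) =
   sumset (foldr (fun i X => sumset X (hfold (h i) (A i))) B s) (hfold (h i) (A i)) by [].
split.
  case/sumsetP=> x /IH [u hu ->] [z /mem_hfold [w hw ->] ->].
  exists (w ++ u).
    by apply/allpairsP; exists (w, u).
  move: hw; rewrite mem_vecsB => /andP[/eqP sw _].
  by rewrite /gen /= -catA sval_cat // addrC.
case=> v /allpairsP [[w u] /= [hw hu ->] ->].
move: (hw); rewrite mem_vecsB => /andP[/eqP sw _].
rewrite /gen /= -catA sval_cat ?sw //; apply/sumsetP.
exists (sval (gen s) u); first by apply/IH; exists u.
exists (sval (gsA i) w); last by rewrite addrC.
by apply/mem_hfold; exists w.
Qed.

End Multi.

Section Rec.
Local Open Scope nat_scope.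

Lemma vle_rcons a b x y : size a = size b -> vle (rcons a x) (rcons b y) = vle a b && (x <= y).
Proof.
elim: a b => [|u a IH] [|w b] //=; first by rewrite andbT.
by move=> [e]; rewrite IH // andbA.
Qed.

Lemma subv_rcons a b x y : size a = size b -> subv (rcons a x) (rcons b y) = rcons (subv a b) (x - y).
Proof.
elim: a b => [|u a IH] [|w b] //=.
by move=> [e]; rewrite IH.
Qed.

Lemma vle_map (I : Type) (s : seq I) (f g : I -> nat) :
  vle (map f s) (map g s) = all (fun i => f i <= g i) s.
Proof. by elim: s => //= i s ->. Qed.

Lemma subv_map (I : Type) (s : seq I) (f g : I -> nat) :
  subv (map f s) (map g s) = map (fun i => f i - g i) s.
Proof. by elim: s => //= i s ->. Qed.

Lemma rcons_nth r (L : seq nat) : size L = r.+1 ->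
  L = rcons (map (fun i : 'I_r => nth 0 L i) (enum 'I_r)) (nth 0 L r).
Proof.
move=> hL.
rewrite (map_comp (nth 0 L) val) val_enum_ord map_nth_iota0 ?hL // -cats1.
by rewrite -{1}(cat_take_drop r L) (drop_nth 0) ?hL // drop_oversize ?hL.
Qed.

Lemma count_split (T : Type) (P Q : pred T) s :
  count P s = count (fun x => Q x && P x) s + count (fun x => ~~ Q x && P x) s.
Proof.
elim: s => //= x s ->; case: (Q x); case: (P x) => //=; rewrite ?addnS ?addSn //.
Qed.

Variables (r : nat) (k : 'I_r -> nat) (m : nat).
Hypotheses (hk : forall i, 0 < k i) (hm : 0 < m).

Definition ks := rcons (map k (enum 'I_r)) m.
Definition dd (h : 'I_r -> nat) c := rcons (map h (enum 'I_r)) c.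
Definition Fc (G : seq (seq nat)) d := count (fun v => ~~ has (vle^~ v) G) (vecs ks d).

Lemma size_ks : size ks = r.+1.
Proof. by rewrite /ks size_rcons size_map size_enum_ord. Qed.

Lemma size_dd h c : size (dd h c) = size ks.
Proof. by rewrite /dd size_ks size_rcons size_map size_enum_ord. Qed.

Lemma EP_base c : evp (fun h => size (vecs ks (dd h c))).
Proof.
have e : forall h, size (vecs ks (dd h c)) =
    ((\prod_(i <- enum 'I_r) 'C(h i + (k i).-1, (k i).-1)) * size (vecsB m c))%N.
  move=> h; rewrite size_vecs ?size_dd // /ks /dd zip_rcons ?size_map //.
  rewrite big_rcons /= zip_map big_map; congr (_ * _); apply: eq_bigr => i _ /=.
  by rewrite -size_vecsB prednK.
apply: (evp_ext _ (evp_mul (evp_prod _ (fun i => evp_bin i (k i).-1)) (evp_const _ (size (vecsB m c))))).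
by exists 0 => h _; rewrite e.
Qed.

Lemma EP_count N : forall G, size G <= N -> (forall g, g \in G -> size g = sumn ks) ->
  forall c, evp (fun h => Fc G (dd h c)).
Proof.
have base : forall c, evp (fun h => Fc [::] (dd h c)).
  move=> c; apply: (evp_ext _ (EP_base c)); exists 0 => h _.
  by rewrite /Fc /= count_predT.
elim: N => [|N IHN] [|g G'] //= hs hsz c.
have hg : size g = sumn ks by apply: hsz; rewrite mem_head.
have hG' : forall g', g' \in G' -> size g' = sumn ks.
  by move=> g' hg'; apply: hsz; rewrite inE hg' orbT.
pose G'' := map (subv^~ g) G'.
have hG'' : forall g', g' \in G'' -> size g' = sumn ks.
  by move=> _ /mapP[g' hg' ->]; rewrite size_subv hG' // hg.
pose D := deg ks g.
have sD : size D = r.+1 by rewrite size_deg size_ks.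
pose e := fun i : 'I_r => nth 0 D i.
pose cB := nth 0 D r.
have hD : D = rcons (map e (enum 'I_r)) cB by apply: rcons_nth.
pose chi := fun h => if vle D (dd h c) then Fc G'' (subv (dd h c) D) else 0.
have heq : forall h, Fc (g :: G') (dd h c) + chi h = Fc G' (dd h c).
  move=> h; rewrite /Fc [RHS](count_split _ (vle g)) addnC; congr (_ + _); last first.
    by apply: eq_count => v /=; rewrite negb_or.
  rewrite count_shift ?size_dd //; rewrite /chi -/D; case: ifP => // _.
  apply: eq_in_count => w; rewrite mem_vecs; last by rewrite size_subv size_dd ?size_deg.
  case/andP=> /eqP sw _ /=; rewrite has_map; congr (~~ _); apply: eq_in_has => g' hg' /=.
  by symmetry; apply: vle_addv_sub; rewrite ?(hG' _ hg') ?hg ?sw.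
apply: (evp_diff (IHN G' (ltnSE hs) hG' c) _ heq).
have sm : size (map e (enum 'I_r)) = size (map (fun i => 0) (enum 'I_r)) by rewrite !size_map.
case: (leqP cB c) => hc.
  have [N0 hN0] := bigN e.
  apply: (evp_ext _ (evp_shift e (IHN G'' _ hG'' (c - cB)))); last by rewrite size_map -ltnS.
  exists N0 => h hh; rewrite /chi hD /dd vle_rcons ?size_map // vle_map hc andbT.
  have -> : all (fun i => e i <= h i) (enum 'I_r).
    by apply/allP => i _; apply: leq_trans (hh i).
  by rewrite subv_rcons ?size_map // subv_map.
apply: (evp_ext _ (evp_const _ 0)); exists 0 => h _.
by rewrite /chi hD /dd vle_rcons ?size_map // leqNgt hc andbF.
Qed.

End Rec.

Lemma count_lt (T : eqType) (a b : pred T) (L : seq T) x :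
  (forall y, a y -> b y) -> x \in L -> b x -> ~~ a x -> (count a L < count b L)%N.
Proof.
move=> hab; elim: L => //= y L IH; rewrite inE => /orP[/eqP<-|hx] hb ha.
  rewrite hb (negbTE ha) add0n add1n ltnS; apply: sub_count => z; exact: hab.
have := IH hx hb ha; case hay: (a y); first by rewrite (hab _ hay) ltn_add2l.
move=> h; apply: leq_trans h _; exact: leq_addl.
Qed.

Lemma wf_list (T : eqType) (L : seq T) (lt : rel T) (Q : T -> Prop) :
  (forall x y z, lt x y -> lt y z -> lt x z) -> (forall x, ~~ lt x x) ->
  (forall v, v \in L -> (forall w, w \in L -> lt w v -> Q w) -> Q v) ->
  forall v, v \in L -> Q v.
Proof.
move=> htr hirr hstep v.
move: {2}(count (lt^~ v) L) (leqnn (count (lt^~ v) L)) => N.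
elim: N v => [|N IH] v hN hv; apply: hstep => // w hw hwv;
  have := count_lt (a := lt^~ w) (b := lt^~ v) (fun y hy => htr _ _ _ hy hwv) hw hwv (hirr w).
  by move=> h; move: (leq_trans h hN); rewrite ltn0.
by move=> h; apply: IH => //; rewrite -ltnS; apply: leq_trans h hN.
Qed.

Lemma card_uniq (S : choiceType) (M : {fset S}) (s : seq S) :
  uniq s -> M =i s -> #|` M| = size s.
Proof.
by move=> us hM; apply: perm_size; apply: uniq_perm => //; apply: fset_uniq.
Qed.

Unset Implicit Arguments. Set Strict Implicit.

Theorem mainTheorem1 (S : nmodType) (r : nat) (hr : (0 < r)%N)
  (A : 'I_r -> {fset S}) (B : {fset S})
  (hA : forall i, A i != fset0) (hB : B != fset0) :
  exists p : {mpoly rat[r]}, exists N : nat,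
    forall h : 'I_r -> nat, (forall i, (N <= h i)%N) ->
      (#|` multisumset B A h|)%:R = p.@[fun i => (h i)%:R].
Proof.
pose k := kA A.
pose m := size (gB B).
have hk : forall i, (0 < k i)%N by move=> i; rewrite lt0n cardfs_eq0 hA.
have hm : (0 < m)%N by rewrite lt0n cardfs_eq0 hB.
pose K := ks k m.
pose gn := gen A B (enum 'I_r).
pose U := fun v => exists w, [/\ size w = size v, deg K w = deg K v,
   sval gn w = sval gn v & lexlt w v].
have hU : upclosed U.
  move=> v x [w [sw dw vw lw]] hvx.
  set t := subv x v.
  have ex : addv v t = x by apply: addv_subv.
  have st : size t = size v by rewrite size_subv (vle_size hvx).
  rewrite -ex; exists (addv w t); split.
  - by rewrite !size_addv ?sw.
  - by rewrite !deg_addv ?sw ?dw.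
  - by rewrite !sval_addv ?sw ?vw.
  - by apply: lexlt_addv; rewrite ?sw.
have [G [hG1 hG2]] := dickson (sumn K) hU.
have hGs : forall g, g \in G -> size g = sumn K by move=> g /hG1 [].
have [p [N hp]] := @EP_count r k m hk _ G (leqnn (size G)) hGs 1.
exists p, N => h hh; rewrite -hp //.
pose L := vecs K (dd h 1).
have hdd : size (dd h 1) = size K := @size_dd r k m h 1.
pose minb := fun v => ~~ has (vle^~ v) G.
have hL : forall v, v \in L -> size v = sumn K /\ deg K v = dd h 1.
  by move=> v; rewrite mem_vecs ?hdd // => /andP[/eqP -> /eqP ->].
have hmin : forall v, v \in L -> U v -> ~~ minb v.
  by move=> v /hL [sv _] hv; rewrite negbK; apply: hG2.
congr (_%:R); rewrite /Fc -/L -size_filter.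
rewrite -(size_map (sval gn)); apply: card_uniq.
  rewrite map_inj_in_uniq ?filter_uniq ?uniq_vecs // => v w.
  rewrite !mem_filter => /andP[mv hv] /andP[mw hw] e.
  apply/eqP; apply/negP => /negP hne.
  have [sv dv] := hL _ hv; have [sw dw] := hL _ hw.
  case/orP: (lexlt_total (etrans sv (esym sw)) hne) => hlt.
    by move: mw; apply/negP; rewrite negbK; apply: hG2 => //; exists v; split; rewrite ?sv ?sw ?dv ?dw.
  by move: mv; apply/negP; rewrite negbK; apply: hG2 => //; exists w; split; rewrite ?sv ?sw ?dv ?dw.
move=> y; rewrite /multisumset; apply/idP/idP.
  move/mem_foldr => [v hv ->].
  have : exists2 w, w \in filter minb L & sval gn w = sval gn v.
    move: v hv; apply: (wf_list (lt := lexlt)) => //.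
      exact: lexlt_trans.
      by move=> x; rewrite lexlt_irr.
    move=> v hv IHv; case hmv: (minb v); first by exists v; rewrite // mem_filter hmv.
    have [sv dv] := hL _ hv.
    have : U v.
      have /hasP [g hg hgv] : has (vle^~ v) G by move: hmv; rewrite /minb => /negbFE.
      exact: (hU _ _ (hG1 g hg).1 hgv).
    case=> w [sw dw vw lw].
    have hwL : w \in L by rewrite mem_vecs ?hdd // sw sv dw dv !eqxx.
    have [w' hw' e'] := IHv w hwL lw; exists w' => //; by rewrite e' vw.
  by case=> w hw <-; apply: map_f.
case/mapP=> v; rewrite mem_filter => /andP[_ hv] ->.
by apply/mem_foldr; exists v.
Qed.
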